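(* Let $J$ be either a closed interval in $\mathbb{R}$ or a circle, and let $n\geq 3$. Then the set of injective maps in $\mathrm{CBV}^n_{\mathbb{R}}(J)$ is dense in $\mathrm{CBV}^n_{\mathbb{R}}(J)$ with respect to the norm $\|\cdot\|_{\mathrm{bv}}$.
   Context: $\mathrm{CBV}^n_{\mathbb{R}}(J)$ denotes the Banach space of continuous maps $F:J\to\mathbb{R}^n$ of bounded variation, with norm $\|F\|_{\mathrm{bv}}=\sup_J|F|+\mathrm{var}\,F$, where $\mathrm{var}\,F$ is the total variation of $F$ over $J$. *)

(* Defs.v *)
From HB Require Import structures.
From mathcomp Require Import all_boot all_order all_algebra.
From mathcomp Require Import all_classical all_reals all_analysis.
Set Implicit Arguments. Unset Strict Implicit. Unset Printing Implicit Defensive.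
Import Order.TTheory GRing.Theory Num.Theory.
Import numFieldNormedType.Exports.
Local Open Scope classical_set_scope.
Local Open Scope ring_scope.

Section CBV.
Context {R : realType} {n : nat}.

Definition enorm (v : 'rV[R]_n) : R := Num.sqrt (\sum_(i < n) v ord0 i ^+ 2).

(** Variation of F : R -> R^n along a partition a = t_0 < t_1 < ... < t_k = b,
    where s = [:: t_1; ...; t_k] (cf. numfun.variation / itv_partition). *)
Definition vvariation (a b : R) (F : R -> 'rV[R]_n) (s : seq R) : R :=
  let G := F \o nth b (a :: s) in
  \sum_(0 <= k < size s) enorm (G k.+1 - G k).

Definition vvariations (a b : R) (F : R -> 'rV[R]_n) : set R :=
  [set vvariation a b F s | s in itv_partition a b].

Definition bounded_var (a b : R) (F : R -> 'rV[R]_n) : Prop :=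
  has_ubound (vvariations a b F).

(** Total variation var F of F over [a, b] (meaningful when bounded_var). *)
Definition tvar (a b : R) (F : R -> 'rV[R]_n) : R := sup (vvariations a b F).

Definition supnorm (a b : R) (F : R -> 'rV[R]_n) : R :=
  sup [set enorm (F t) | t in [set` `[a, b]]].

Definition bvnorm (a b : R) (F : R -> 'rV[R]_n) : R := supnorm a b F + tvar a b F.

Definition CBV_interval (a b : R) (F : R -> 'rV[R]_n) : Prop :=
  {within [set` `[a, b]], continuous F} /\ bounded_var a b F.

(** Maps on the circle J = R/Z are represented by their 1-periodic lifts
    R -> R^n; the variation over the circle is the variation over [0, 1]
    of the lift, and sup_J |F| is the sup over [0, 1]. *)
Definition CBV_circle (F : R -> 'rV[R]_n) : Prop :=
  [/\ continuous F, (forall t, F (t + 1) = F t) & bounded_var 0 1 F].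

End CBV.

(* Main.v *)
Require Import Defs.
From HB Require Import structures.
From mathcomp Require Import all_boot all_order all_algebra.
From mathcomp Require Import all_classical all_reals all_analysis.
From mathcomp Require Import ring lra.
Import Order.TTheory GRing.Theory Num.Theory.
Import numFieldNormedType.Exports.
Local Open Scope classical_set_scope.
Local Open Scope ring_scope.
Set Implicit Arguments. Unset Strict Implicit. Unset Printing Implicit Defensive.

Section P1.
Variables (R : realType) (n : nat).

Lemma sum_sqr_le (I : Type) (r : seq I) (f : I -> R) :
  (forall i, 0 <= f i) -> \sum_(i <- r) f i ^+ 2 <= (\sum_(i <- r) f i) ^+ 2.
Proof.
move=> f0; elim: r => [|x r IH]; first by rewrite !big_nil expr0n.
rewrite !big_cons.
have S0 : 0 <= \sum_(i <- r) f i by apply: sumr_ge0 => i _.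
have := f0 x; nra.
Qed.

Lemma enorm_le_sum (v : 'rV[R]_n) : enorm v <= \sum_i `|v ord0 i|.
Proof.
rewrite /enorm -(@ger0_norm _ (\sum_i `|v ord0 i|)); last by apply: sumr_ge0.
rewrite -sqrtr_sqr ler_sqrt; last by apply: sqr_ge0.
have H := @sum_sqr_le _ (index_enum 'I_n) (fun i => `|v ord0 i|) (fun i => normr_ge0 _).
apply: (le_trans _ H).
by apply: ler_sum => i _; rewrite real_normK // num_real.
Qed.

Lemma abs_le_enorm (v : 'rV[R]_n) i : `|v ord0 i| <= enorm v.
Proof.
rewrite /enorm -sqrtr_sqr ler_sqrt; last by apply: sumr_ge0 => j _; apply: sqr_ge0.
rewrite (bigD1 i) //= lerDl; apply: sumr_ge0 => j _; apply: sqr_ge0.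
Qed.

Lemma enorm_ge0 (v : 'rV[R]_n) : 0 <= enorm v.
Proof. exact: sqrtr_ge0. Qed.

Lemma partition_pts (a b : R) (s : seq R) k : itv_partition a b s -> (k < size s)%N ->
  let x := nth b (a :: s) in
  [/\ x k \in `[a, b], x k.+1 \in `[a, b] & x k <= x k.+1].
Proof.
move=> abs ks x; split.
- by rewrite in_itv /=; apply/andP; split;
    [apply: itv_partition_nth_ge abs|apply: itv_partition_nth_le abs];
    apply: (leq_trans ks).
- by rewrite in_itv /=; apply/andP; split;
    [apply: itv_partition_nth_ge abs|apply: itv_partition_nth_le abs].
- have := @nondecreasing_fun_itv_partition _ _ a b id s.
  by apply => // u v _ _.
Qed.

Lemma vvar_le (a b : R) (X : R -> 'rV[R]_n) (U : R -> R) (k : R) (s : seq R) :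
  itv_partition a b s -> 0 <= k ->
  {in `[a, b] &, nondecreasing_fun U} ->
  (forall x y, x \in `[a, b] -> y \in `[a, b] -> x <= y ->
     forall i, `|X y ord0 i - X x ord0 i| <= k * (U y - U x)) ->
  vvariation a b X s <= n%:R * k * (U b - U a).
Proof.
move=> abs k0 Und HX; rewrite /vvariation.
rewrite -(nondecreasing_variation Und abs) /variation mulr_sumr.
rewrite !big_nat; apply: ler_sum => j /= js.
have [h1 h2 h3] := partition_pts abs js.
apply: le_trans (enorm_le_sum _) _.
rewrite ger0_norm; last by rewrite subr_ge0; apply: Und.
apply: le_trans (_ : \sum_(i < n) (k * (U (nth b (a :: s) j.+1) - U (nth b (a :: s) j))) <= _).
  apply: ler_sum => i _; rewrite !mxE; exact: HX.
by rewrite sumr_const card_ord -mulrA mulr_natl.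
Qed.

End P1.

Lemma sum_le1 (P : nat -> bool) M :
  (forall m, (m.+1 < M)%N -> ~~ P m) -> (\sum_(0 <= m < M) P m <= 1)%N.
Proof.
case: M => [|M] H; first by rewrite big_geq.
rewrite big_nat_recr //= big_nat big1 ?add0n ?leq_b1 // => m /andP[_ hm].
by apply/eqP; rewrite eqb0; apply: H; rewrite ltnS.
Qed.

Lemma sum_le2 (P : nat -> bool) M :
  (forall m m', P m -> P m' -> (m' <= m.+1)%N) -> (\sum_(0 <= m < M) P m <= 2)%N.
Proof.
move=> H; elim: M => [|M IH]; first by rewrite big_geq.
rewrite big_nat_recr //=; case PM: (P M); last by rewrite addn0.
have : (\sum_(0 <= m < M) P m <= 1)%N.
  apply: sum_le1 => m hm; apply/negP => Pm.
  by have := H _ _ Pm PM; rewrite leqNgt hm.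
by move=> h; rewrite -[2%N]/(1 + 1)%N leq_add2r.
Qed.

Section Count.
Variable R : realType.

Lemma kill_close (base x s : R) m m' : 0 < s ->
  `|base + m%:R * (2 * s) - x| < 2 * s ->
  `|base + m'%:R * (2 * s) - x| < 2 * s -> (m' <= m.+1)%N.
Proof.
move=> s0; rewrite !ltr_norml => /andP[h1 h2] /andP[h3 h4].
have h5 : (m'%:R - m%:R) * (2 * s) < 2 * (2 * s) by lra.
rewrite ltr_pM2r in h5; last lra.
have h6 : (m'%:R : R) < (m.+2)%:R by rewrite -addn2 natrD; lra.
by rewrite ltr_nat in h6.
Qed.

Lemma kill_le2 (base x s : R) M : 0 < s ->
  (\sum_(m < M) nat_of_bool (`|base + (m : nat)%:R * (2 * s) - x| < 2 * s)%R <= 2)%N.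
Proof.
move=> s0; rewrite -(big_mkord xpredT (fun m : nat => nat_of_bool (`|base + m%:R * (2 * s) - x| < 2 * s))%R).
by apply: sum_le2 => m m'; apply: kill_close.
Qed.


Lemma count3 n (hn : (3 <= n)%N) (c : 'rV[R]_n) (r : R) (M : nat) (Q : seq 'rV[R]_n) :
  0 < r -> (0 < M)%N -> (8 * size Q < M ^ 3)%N ->
  exists c' : 'rV[R]_n, (forall i, `|c' ord0 i - c ord0 i| + r / M%:R <= r) /\
    forall q, q \in Q -> exists i, 2 * (r / M%:R) <= `|c' ord0 i - q ord0 i|.
Proof.
move=> r0 M0 hQ.
set s := r / M%:R.
have s0 : 0 < s by rewrite divr_gt0 // ltr0n.
have Ms : M%:R * s = r by rewrite /s mulrC divfK // pnatr_eq0 -lt0n.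
have h0 : (0 < n)%N by apply: leq_trans hn.
have h1 : (1 < n)%N by apply: leq_trans hn.
pose i0 := Ordinal h0. pose i1 := Ordinal h1. pose i2 := Ordinal hn.
pose base i := c ord0 i - r + s.
pose cen i (m : nat) := base i + m%:R * (2 * s).
pose kil i m (q : 'rV[R]_n) : nat := (`|cen i m - q ord0 i| < 2 * s)%R.
pose F (m0 m1 m2 : 'I_M) := (\sum_(q <- Q) kil i0 m0 q * kil i1 m1 q * kil i2 m2 q)%N.
have HT : (\sum_(m0 < M) \sum_(m1 < M) \sum_(m2 < M) F m0 m1 m2 <= 8 * size Q)%N.
  rewrite /F.
  under eq_bigr do under eq_bigr do rewrite exchange_big /=.
  under eq_bigr do rewrite exchange_big /=.
  rewrite exchange_big /=.
  have H8 : forall q, (\sum_(m0 < M) \sum_(m1 < M) \sum_(m2 < M)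
      (kil i0 m0 q * kil i1 m1 q * kil i2 m2 q) <= 8)%N.
    move=> q.
    under eq_bigr do under eq_bigr do rewrite -big_distrr /=.
    under eq_bigr do rewrite -big_distrl /=.
    under eq_bigr do rewrite -big_distrr /=.
    rewrite -big_distrl -big_distrl /=.
    rewrite -[8%N]/(2 * 2 * 2)%N; apply: leq_mul; first apply: leq_mul.
    exact: (kill_le2 (base i0) (q ord0 i0) M s0).
    exact: (kill_le2 (base i1) (q ord0 i1) M s0).
    exact: (kill_le2 (base i2) (q ord0 i2) M s0).
  apply: (@leq_trans (\sum_(q <- Q) 8)%N).
    by apply: leq_sum => q _; exact: (H8 q).
  by rewrite big_const_seq count_predT iter_addn_0 mulnC.
have [m0 [m1 [m2 HF]]] : exists m0 m1 m2 : 'I_M, F m0 m1 m2 = 0%N.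
  apply: contrapT => Hn.
  have : (M ^ 3 <= \sum_(m0 < M) \sum_(m1 < M) \sum_(m2 < M) F m0 m1 m2)%N.
    have E : (\sum_(m0 < M) \sum_(m1 < M) \sum_(m2 < M) 1 = M ^ 3)%N.
      by rewrite !big_const_ord !iter_addn_0 !mul1n expnS expnS expn1 mulnA.
    rewrite -E; apply: leq_sum => a _; apply: leq_sum => b _; apply: leq_sum => d _.
    rewrite lt0n; apply/eqP => h; apply: Hn; by exists a, b, d.
  by rewrite leqNgt (leq_ltn_trans HT hQ).
have key : forall i (m : 'I_M), `|cen i m - c ord0 i| + s <= r.
  move=> i m.
  have hm1 : (m%:R + 1) * s <= r.
    rewrite -Ms ler_pM2r // natr1 ler_nat; exact: ltn_ord.
  have hm0 : 0 <= m%:R * s by rewrite mulr_ge0 // ltW.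
  have -> : cen i m - c ord0 i = - r + s + 2 * (m%:R * s).
    by rewrite /cen /base; ring.
  have : `|- r + s + 2 * (m%:R * s)| <= r - s.
    rewrite ler_norml; apply/andP; split; lra.
  lra.
have sr : s <= r.
  rewrite -Ms.
  by apply: ler_peMl; [exact: ltW | rewrite ler1n].
pose c' := \row_i (if i == i0 then cen i m0 else if i == i1 then cen i m1
   else if i == i2 then cen i m2 else c ord0 i).
exists c'; split.
  move=> i; rewrite mxE.
  case: ifP => _; first exact: key.
  case: ifP => _; first exact: key.
  case: ifP => _; first exact: key.
  by rewrite subrr normr0 add0r.
move=> q qQ.
move/eqP: HF; rewrite /F sum_nat_seq_eq0 => /allP /(_ q qQ) /=.
rewrite !muln_eq0 !eqb0 -!leNgt => /orP[/orP[h|h]|h].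
- by exists i0; rewrite mxE eqxx.
- by exists i1; rewrite mxE.
- by exists i2; rewrite mxE.
Qed.

End Count.

Section NumCore.
Variable R : realType.

Lemma core_num (D D0 d1 d10 d2 d20 u1 u2 qi ci c2i h e s L B1 B2 r2 : R) :
  0 < e -> 0 < s -> 0 < L -> 0 <= h ->
  `|D - D0| <= 2 * h -> `|d1 - d10| <= 2 * h -> `|d2 - d20| <= 2 * h ->
  `|d20| <= L -> `|u1| <= B1 -> `|u2| <= B2 -> `|u2 - c2i| <= r2 ->
  r2 <= e * s / (4 * L) -> `|u1 - ci| <= s / 2 -> 2 * s <= `|ci - qi| ->
  e <= `|d1| -> 4 * h <= e -> 8 * h * (1 + B1 + B2) <= e * s ->
  qi = - (D0 + d20 * c2i) / d10 ->
  D + d1 * u1 + d2 * u2 != 0.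
Proof.
move=> e0 s0 L0 h0 hD hd1 hd2 hd20 hu1 hu2 hu2c hr2 hu1c hci hed1 h4 h8 hq.
have B10 : 0 <= B1 by apply: le_trans hu1.
have B20 : 0 <= B2 by apply: le_trans hu2.
have hd10 : e / 2 <= `|d10|.
  have := lerB_dist d1 d10; lra.
have d10n : d10 != 0 by rewrite -normr_gt0; lra.
have hq1 : 3 * s / 2 <= `|u1 - qi|.
  have := ler_distD u1 ci qi.
  rewrite distrC in hu1c; lra.
have big : (e / 2) * (3 * s / 2) <= `|d10 * (u1 - qi)|.
  by rewrite normrM; apply: ler_pM => //; lra.
have t1 : `|(d1 - d10) * u1| <= 2 * h * B1.
  by rewrite normrM; apply: ler_pM.
have t2 : `|(d2 - d20) * u2| <= 2 * h * B2.
  by rewrite normrM; apply: ler_pM.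
have t3 : `|d20 * (u2 - c2i)| <= e * s / 4.
  rewrite normrM; apply: le_trans (_ : L * r2 <= _).
    by apply: ler_pM.
  apply: le_trans (_ : L * (e * s / (4 * L)) <= _).
    by rewrite ler_pM2l.
  by rewrite le_eqVlt; apply/orP; left; apply/eqP; field; lra.
apply/eqP => S0.
have eq : d10 * (u1 - qi) = - ((D - D0) + (d1 - d10) * u1 + (d2 - d20) * u2 + d20 * (u2 - c2i)).
  have -> : d10 * (u1 - qi) = d10 * u1 + D0 + d20 * c2i.
    by rewrite hq; field.
  have -> : D = - (d1 * u1 + d2 * u2).
    by apply/eqP; rewrite -subr_eq0 opprK addrA S0.
  ring.
have : `|d10 * (u1 - qi)| <= `|D - D0| + `|(d1 - d10) * u1| + `|(d2 - d20) * u2| + `|d20 * (u2 - c2i)|.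
  rewrite eq normrN; apply: le_trans (ler_normD _ _) _; rewrite lerD2r.
  apply: le_trans (ler_normD _ _) _; rewrite lerD2r.
  exact: ler_normD.
have hs : 0 < e * s by apply: mulr_gt0.
nra.
Qed.

End NumCore.

Definition inbox (R : realType) n (c : 'rV[R]_n) (r : R) (w : 'rV[R]_n) :=
  forall i, `|w ord0 i - c ord0 i| <= r.
Definition subbox (R : realType) n (c' : 'rV[R]_n) (r' : R) (c : 'rV[R]_n) (r : R) :=
  forall i, `|c' ord0 i - c ord0 i| + r' <= r.

Section Boxes.
Variables (R : realType) (n : nat).

Lemma coord_le_sum (v : 'rV[R]_n) i : `|v ord0 i| <= \sum_j `|v ord0 j|.
Proof. by rewrite (bigD1 i) //= lerDl; apply: sumr_ge0. Qed.

Lemma inbox_bound (c : 'rV[R]_n) r w i : inbox c r w ->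
  `|w ord0 i| <= \sum_j `|c ord0 j| + r.
Proof.
move=> /(_ i) h; have := lerB_dist (w ord0 i) (c ord0 i).
have := coord_le_sum c i; lra.
Qed.

Lemma subbox_inbox (c' : 'rV[R]_n) r' c r w :
  subbox c' r' c r -> inbox c' r' w -> inbox c r w.
Proof.
move=> hs hw i; have := ler_distD (c' ord0 i) (w ord0 i) (c ord0 i).
have := hs i; have := hw i; lra.
Qed.

Lemma subbox_trans (c'' : 'rV[R]_n) r'' c' r' c r :
  subbox c'' r'' c' r' -> subbox c' r' c r -> subbox c'' r'' c r.
Proof.
move=> h1 h2 i; have := ler_distD (c' ord0 i) (c'' ord0 i) (c ord0 i).
have := h1 i; have := h2 i; lra.
Qed.

Lemma subbox_same (c : 'rV[R]_n) r' r : r' <= r -> subbox c r' c r.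
Proof. by move=> h i; rewrite subrr normr0 add0r. Qed.

Lemma inbox_le (c : 'rV[R]_n) r' r w : r' <= r -> inbox c r' w -> inbox c r w.
Proof. by move=> h hw i; apply: le_trans (hw i) h. Qed.

End Boxes.

Section Step.
Variables (R : realType) (n : nat).
Hypothesis hn : (3 <= n)%N.
Variables (a b : R) (F : R -> 'rV[R]_n) (p1 p2 U : R -> R).
Hypotheses (ab : a <= b) (Uab : U a < U b) (Ucont : {within `[a, b], continuous U}).
Hypothesis Ubnd : forall x, x \in `[a, b] -> U a <= U x <= U b.
Hypothesis HF : forall x y, x \in `[a, b] -> y \in `[a, b] ->
  forall i, `|F y ord0 i - F x ord0 i| <= `|U y - U x|.
Hypothesis H1 : forall x y, x \in `[a, b] -> y \in `[a, b] ->
  `|p1 y - p1 x| <= `|U y - U x|.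
Hypothesis H2 : forall x y, x \in `[a, b] -> y \in `[a, b] ->
  `|p2 y - p2 x| <= `|U y - U x|.

Lemma grid N : (0 < N)%N -> exists g : nat -> R, forall k, (k <= N)%N ->
  g k \in `[a, b] /\ U (g k) = U a + k%:R * ((U b - U a) / N%:R).
Proof.
move=> N0.
have : forall k, exists t, (k <= N)%N ->
    t \in `[a, b] /\ U t = U a + k%:R * ((U b - U a) / N%:R).
  move=> k; case: (leqP k N) => kN; last by exists a.
  have N0' : 0 < (N%:R : R) by rewrite ltr0n.
  set h := (U b - U a) / N%:R.
  have h0 : 0 <= h by rewrite divr_ge0 // ?subr_ge0 ?ltW.
  have hk : k%:R * h <= U b - U a.
    have e1 : N%:R * h = U b - U a by rewrite /h mulrC divfK // gt_eqF.
    by rewrite -e1 ler_wpM2r // ler_nat.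
  have hk0 : 0 <= k%:R * h by rewrite mulr_ge0.
  have [t tab Ut] : exists2 t, t \in `[a, b] & U t = U a + k%:R * h.
    apply: IVT => //.
    have Uab' : U a <= U b := ltW Uab.
    rewrite (min_l Uab') (max_r Uab'); apply/andP; split; lra.
  by exists t.
by move/choice => [g Hg]; exists g => k kN; exact: Hg k kN.
Qed.

Lemma approx N g : (0 < N)%N ->
  (forall k, (k <= N)%N -> g k \in `[a, b] /\ U (g k) = U a + k%:R * ((U b - U a) / N%:R)) ->
  forall x, x \in `[a, b] -> exists j, (j <= N)%N /\ `|U x - U (g j)| <= (U b - U a) / N%:R.
Proof.
move=> N0 Hg x xab.
have N0' : 0 < (N%:R : R) by rewrite ltr0n.
set h := (U b - U a) / N%:R.
have h0 : 0 < h by rewrite divr_gt0 // subr_gt0.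
have /andP[ux1 ux2] := Ubnd xab.
set y := (U x - U a) / h.
have y0 : 0 <= y by rewrite divr_ge0 ?subr_ge0 // ltW.
have /andP[hj1 hj2] := truncn_itv y0.
have yh : U x - U a = y * h by rewrite /y divfK // gt_eqF.
have e1 : N%:R * h = U b - U a by rewrite /h mulrC divfK // gt_eqF.
exists (Num.truncn y); split.
  rewrite -(ler_nat R); apply: le_trans hj1 _.
  rewrite /y ler_pdivrMr //; lra.
have jN : (Num.truncn y <= N)%N.
  rewrite -(ler_nat R); apply: le_trans hj1 _.
  rewrite /y ler_pdivrMr //; lra.
have [_ ->] := Hg _ jN.
rewrite -/h ler_norml; apply/andP; split; nra.
Qed.

Lemma pair_close (f : R -> R) x x' y y' hh :
  (forall x y, x \in `[a, b] -> y \in `[a, b] -> `|f y - f x| <= `|U y - U x|) ->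
  x \in `[a, b] -> x' \in `[a, b] -> y \in `[a, b] -> y' \in `[a, b] ->
  `|U x - U x'| <= hh -> `|U y - U y'| <= hh ->
  `|(f y - f x) - (f y' - f x')| <= 2 * hh.
Proof.
move=> Hf xi x'i yi y'i hx hy.
have := Hf _ _ x'i xi; have := Hf _ _ y'i yi.
have -> : (f y - f x) - (f y' - f x') = (f y - f y') - (f x - f x') by ring.
move=> h1 h2; apply: le_trans (ler_normB _ _) _; lra.
Qed.

Lemma step1 (e : R) (c1 : 'rV[R]_n) (r1 : R) (c2 : 'rV[R]_n) (r2 : R) : 0 < e -> 0 < r1 -> 0 < r2 ->
  exists c1' (r1' r2' : R), [/\ 0 < r1', 0 < r2', r2' <= r2, subbox c1' r1' c1 r1 &
   forall w1 w2, inbox c1' r1' w1 -> inbox c2 r2' w2 ->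
   forall x y, x \in `[a, b] -> y \in `[a, b] -> e <= `|p1 y - p1 x| ->
   F y - F x + (p1 y - p1 x) *: w1 + (p2 y - p2 x) *: w2 != 0].
Proof.
move=> e0 r10 r20.
set L := U b - U a.
have L0 : 0 < L by rewrite subr_gt0.
set B1 := \sum_i `|c1 ord0 i| + r1.
set B2 := \sum_i `|c2 ord0 i| + r2.
have B10 : 0 <= B1 by apply: addr_ge0; [apply: sumr_ge0 => i _; exact: normr_ge0 | exact: ltW].
have B20 : 0 <= B2 by apply: addr_ge0; [apply: sumr_ge0 => i _; exact: normr_ge0 | exact: ltW].
set E := 1 + B1 + B2.
have E0 : 0 < E by rewrite /E; lra.
set P := 4 * L / e + 2.
set Q := 8 * E * L / (e * r1).
have P0 : 0 <= P by rewrite /P addr_ge0 // divr_ge0 // ?mulr_ge0 // ltW.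
have Q0 : 0 <= Q by rewrite /Q divr_ge0 ?mulr_ge0 ?ltW.
set M := (Num.truncn (8 * (P + Q) ^+ 2)).+1.
have M0 : (0 < M)%N by [].
have hM : 8 * (P + Q) ^+ 2 < M%:R by apply: truncnS_gt.
have M1 : 1 <= (M%:R : R) by rewrite ler1n.
set s := r1 / M%:R.
have s0 : 0 < s by rewrite divr_gt0 // ltr0n.
set z := 4 * L / e + Q * M%:R.
have z0 : 0 <= z.
  apply: addr_ge0; last by apply: mulr_ge0.
  by apply: divr_ge0; [apply: mulr_ge0 => //; exact: ltW | exact: ltW].
set N := (Num.truncn z).+1.
have hN : z < N%:R by apply: truncnS_gt.
have hN2 : (N%:R : R) <= z + 1.
  by rewrite /N -natr1 lerD2r truncn_le.
have N0 : (0 < N)%N by [].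
have N0' : 0 < (N%:R : R) by rewrite ltr0n.
set h := L / N%:R.
have h0 : 0 < h by rewrite divr_gt0.
have h4 : 4 * h <= e.
  have hz : 4 * L / e <= z by rewrite /z lerDl mulr_ge0.
  have : 4 * L / e < N%:R by apply: le_lt_trans hz hN.
  rewrite ltr_pdivrMr // => h1.
  rewrite /h -subr_ge0.
  have -> : e - 4 * (L / N%:R) = (N%:R * e - 4 * L) / N%:R by field; lra.
  rewrite divr_ge0 ?ltW //; lra.
have h8 : 8 * h * E <= e * s.
  have hz : Q * M%:R <= z by rewrite /z lerDr divr_ge0 ?mulr_ge0 ?ltW.
  have : Q * M%:R < N%:R by apply: le_lt_trans hz hN.
  have -> : Q * M%:R = (8 * E * L * M%:R) / (e * r1) by rewrite /Q; field; lra.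
  rewrite ltr_pdivrMr ?mulr_gt0 // => h1.
  rewrite /h /s -subr_ge0.
  have -> : e * (r1 / M%:R) - 8 * (L / N%:R) * E =
     (N%:R * (e * r1) - 8 * E * L * M%:R) / (N%:R * M%:R).
    by field; apply/andP; split; lra.
  by rewrite divr_ge0 ?mulr_ge0 ?ltW //; lra.
set r2' := Num.min r2 (e * s / (4 * L)).
have r2'0 : 0 < r2'.
  have : 0 < e * s / (4 * L) by apply: divr_gt0; apply: mulr_gt0.
  by rewrite lt_min r20.
have r2'r2 : r2' <= r2 by rewrite ge_min lexx.
have r2'b : r2' <= e * s / (4 * L) by rewrite ge_min lexx orbT.
have [g Hg] := grid N0.
pose q j k : 'rV[R]_n := \row_i (- (F (g k) ord0 i - F (g j) ord0 i +
   (p2 (g k) - p2 (g j)) * c2 ord0 i) / (p1 (g k) - p1 (g j))).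
set Qs := [seq q j k | j <- iota 0 N.+1, k <- iota 0 N.+1].
have hQ : (8 * size Qs < M ^ 3)%N.
  rewrite size_allpairs size_iota.
  have hN1 : (N.+1%:R : R) <= (P + Q) * M%:R.
    rewrite -natr1 mulrDl.
    have : P <= P * M%:R by rewrite ler_peMr.
    have : z = P - 2 + Q * M%:R by rewrite /z /P; ring.
    lra.
  have hN1' : (N.+1%:R : R) ^+ 2 <= ((P + Q) * M%:R) ^+ 2.
    by rewrite !expr2; apply: ler_pM => //; rewrite ler0n.
  have : 8 * (N.+1%:R : R) ^+ 2 < (M%:R) ^+ 3.
    apply: (@le_lt_trans _ _ (8 * ((P + Q) * M%:R) ^+ 2)).
      by rewrite ler_pM2l.
    rewrite exprMn mulrA [M%:R ^+ 3]exprS ltr_pM2r //.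
    by rewrite exprn_gt0 // ltr0n.
  by rewrite -natrX -natrX -natrM ltr_nat mulnn.
have [c1' [Hsub Hav]] := count3 hn c1 r10 M0 hQ.
exists c1', (s / 2), r2'; split => //.
- by rewrite divr_gt0.
- move=> i; have := Hsub i; rewrite -/s; lra.
move=> w1 w2 hw1 hw2 x y xab yab hexy.
have [j [jN hj]] := approx N0 Hg xab.
have [k [kN hk]] := approx N0 Hg yab.
have qin : q j k \in Qs.
  by apply: allpairs_f; rewrite mem_iota add0n ltnS.
have [i hi] := Hav _ qin.
have [gj1 gj2] := Hg _ jN.
have [gk1 gk2] := Hg _ kN.
have hw1' : inbox c1 r1 w1.
  apply: subbox_inbox hw1 => i'; have := Hsub i'; rewrite -/s; lra.
have hw2' : inbox c2 r2 w2 by apply: inbox_le hw2.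
apply/eqP => Heq.
have := congr1 (fun v : 'rV[R]_n => v ord0 i) Heq.
rewrite !mxE /= => Hi.
have Hne : F y ord0 i - F x ord0 i + (p1 y - p1 x) * w1 ord0 i + (p2 y - p2 x) * w2 ord0 i != 0.
  apply: (@core_num R (F y ord0 i - F x ord0 i) (F (g k) ord0 i - F (g j) ord0 i)
  (p1 y - p1 x) (p1 (g k) - p1 (g j)) (p2 y - p2 x) (p2 (g k) - p2 (g j))
  (w1 ord0 i) (w2 ord0 i) (q j k ord0 i) (c1' ord0 i) (c2 ord0 i) h e s L B1 B2 r2'
  e0 s0 L0 (ltW h0)).
  - by apply: (pair_close (f := fun t => F t ord0 i)) => // ? ? ? ?; apply: HF.
  - by apply: pair_close.
  - by apply: pair_close.
  - apply: le_trans (H2 gj1 gk1) _.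
    have := Ubnd gj1; have := Ubnd gk1; rewrite ler_norml => /andP[? ?] /andP[? ?].
    apply/andP; split; rewrite /L; lra.
  - exact: inbox_bound hw1'.
  - exact: inbox_bound hw2'.
  - exact: hw2 i.
  - exact: r2'b.
  - exact: hw1 i.
  - exact: hi.
  - exact: hexy.
  - exact: h4.
  - exact: h8.
  - by rewrite mxE.
by rewrite Hi eqxx in Hne.
Qed.

End Step.

Section Generic.
Variables (R : realType) (n : nat).
Hypothesis hn : (3 <= n)%N.
Variables (a b : R) (F : R -> 'rV[R]_n) (p1 p2 U : R -> R).
Hypotheses (ab : a <= b) (Uab : U a < U b) (Ucont : {within `[a, b], continuous U}).
Hypothesis Ubnd : forall x, x \in `[a, b] -> U a <= U x <= U b.
Hypothesis HF : forall x y, x \in `[a, b] -> y \in `[a, b] ->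
  forall i, `|F y ord0 i - F x ord0 i| <= `|U y - U x|.
Hypothesis H1 : forall x y, x \in `[a, b] -> y \in `[a, b] ->
  `|p1 y - p1 x| <= `|U y - U x|.
Hypothesis H2 : forall x y, x \in `[a, b] -> y \in `[a, b] ->
  `|p2 y - p2 x| <= `|U y - U x|.

Definition good (e : R) (c1 : 'rV[R]_n) (r1 : R) (c2 : 'rV[R]_n) (r2 : R) :=
  forall w1 w2, inbox c1 r1 w1 -> inbox c2 r2 w2 ->
  forall x y, x \in `[a, b] -> y \in `[a, b] ->
  (e <= `|p1 y - p1 x| \/ e <= `|p2 y - p2 x|) ->
  F y - F x + (p1 y - p1 x) *: w1 + (p2 y - p2 x) *: w2 != 0.

Lemma stage (e : R) (c1 : 'rV[R]_n) (r1 : R) (c2 : 'rV[R]_n) (r2 : R) :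
  0 < e -> 0 < r1 -> 0 < r2 ->
  exists c1' (r1' : R) c2' (r2' : R), [/\ 0 < r1', 0 < r2', subbox c1' r1' c1 r1,
    subbox c2' r2' c2 r2 & good e c1' r1' c2' r2'].
Proof.
move=> e0 r10 r20.
have [c1' [r1' [r2a [r1'0 r2a0 r2ale Hs1 G1]]]] :=
  step1 hn ab Uab Ucont Ubnd HF H1 H2 c1 c2 e0 r10 r20.
have [c2' [r2' [r1'' [r2'0 r1''0 r1''le Hs2 G2]]]] :=
  step1 hn ab Uab Ucont Ubnd HF H2 H1 c2 c1' e0 r2a0 r1'0.
exists c1', r1'', c2', r2'; split => //.
- exact: subbox_trans (subbox_same _ r1''le) Hs1.
- exact: subbox_trans Hs2 (subbox_same _ r2ale).
move=> w1 w2 hw1 hw2 x y xab yab [h|h].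
- apply: G1 => //; first exact: inbox_le hw1.
  exact: subbox_inbox Hs2 hw2.
- have := G2 w2 w1 hw2 hw1 x y xab yab h.
  by rewrite addrAC.
Qed.

Lemma nested_sup (lo hi : nat -> R) : (forall m k, lo m <= hi k) ->
  forall k, lo k <= sup [set lo m | m in [set: nat]] <= hi k.
Proof.
move=> H k.
have ne : [set lo m | m in [set: nat]] !=set0 by exists (lo 0%N), 0%N.
have ub : forall k, ubound [set lo m | m in [set: nat]] (hi k).
  by move=> k' _ [m _ <-]; apply: H.
apply/andP; split; last exact: ge_sup.
have hs : has_sup [set lo m | m in [set: nat]] by split => //; exists (hi 0%N).
by apply: sup_upper_bound => //; exists k.
Qed.

Lemma generic (d : R) : 0 < d -> exists w1 w2 : 'rV[R]_n,
  (forall i, `|w1 ord0 i| <= d /\ `|w2 ord0 i| <= d) /\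
  forall x y, x \in `[a, b] -> y \in `[a, b] -> (p1 x != p1 y \/ p2 x != p2 y) ->
  F x + p1 x *: w1 + p2 x *: w2 != F y + p1 y *: w1 + p2 y *: w2.
Proof.
move=> d0.
pose B := (('rV[R]_n * R) * ('rV[R]_n * R))%type.
have Hs : forall kB : nat * B, exists B' : B, 0 < kB.2.1.2 -> 0 < kB.2.2.2 ->
   [/\ 0 < B'.1.2, 0 < B'.2.2, subbox B'.1.1 B'.1.2 kB.2.1.1 kB.2.1.2,
       subbox B'.2.1 B'.2.2 kB.2.2.1 kB.2.2.2 &
       good (kB.1.+1%:R)^-1 B'.1.1 B'.1.2 B'.2.1 B'.2.2].
  move=> [k [[c1 r1] [c2 r2]]] /=.
  case: (pselect (0 < r1 /\ 0 < r2)) => [[r10 r20]|hn']; last first.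
    by exists ((c1, r1), (c2, r2)) => h1 h2; exfalso; apply: hn'.
  have e0 : 0 < (k.+1%:R : R)^-1 by rewrite invr_gt0 ltr0n.
  have [c1' [r1' [c2' [r2' [? ? ? ? ?]]]]] := stage c1 c2 e0 r10 r20.
  by exists ((c1', r1'), (c2', r2')).
have [f Hf] := choice Hs.
pose fix Bs k : B := if k is k'.+1 then f (k', Bs k') else ((0, d), (0, d)).
have Hv : forall k, 0 < (Bs k).1.2 /\ 0 < (Bs k).2.2.
  elim => [|k [IH1 IH2]] /=; first by [].
  by have [] := Hf (k, Bs k) IH1 IH2.
have Hsucc : forall k,
  [/\ subbox (Bs k.+1).1.1 (Bs k.+1).1.2 (Bs k).1.1 (Bs k).1.2,
      subbox (Bs k.+1).2.1 (Bs k.+1).2.2 (Bs k).2.1 (Bs k).2.2 &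
      good (k.+1%:R)^-1 (Bs k.+1).1.1 (Bs k.+1).1.2 (Bs k.+1).2.1 (Bs k.+1).2.2].
  by move=> k; have [v1 v2] := Hv k; have [_ _ ? ? ?] := Hf (k, Bs k) v1 v2.
have Hnest : forall m k, (m <= k)%N ->
   subbox (Bs k).1.1 (Bs k).1.2 (Bs m).1.1 (Bs m).1.2 /\
   subbox (Bs k).2.1 (Bs k).2.2 (Bs m).2.1 (Bs m).2.2.
  move=> m k /subnK <-; elim: (k - m)%N => [|j [IH1 IH2]].
    by rewrite add0n; split; apply: subbox_same.
  rewrite addSn; have [S1 S2 _] := Hsucc (j + m)%N.
  by split; [apply: subbox_trans S1 IH1 | apply: subbox_trans S2 IH2].
have key : forall (sel : B -> 'rV[R]_n * R),
    (forall m k, (m <= k)%N -> subbox (sel (Bs k)).1 (sel (Bs k)).2 (sel (Bs m)).1 (sel (Bs m)).2) ->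
    (forall k, 0 < (sel (Bs k)).2) ->
    forall k, inbox (sel (Bs k)).1 (sel (Bs k)).2
      (\row_i sup [set (sel (Bs m)).1 ord0 i - (sel (Bs m)).2 | m in [set: nat]]).
  move=> sel Hn Hp k i; rewrite mxE.
  pose c m := (sel (Bs m)).1 ord0 i. pose r m := (sel (Bs m)).2.
  have Hlh : forall m k', c m - r m <= c k' + r k'.
    move=> m k'; case: (leqP m k') => hmk.
      have := Hn _ _ hmk i; have := Hp k'; rewrite -/(c m) -/(c k') -/(r m) -/(r k').
      have /andP[n1 n2] : - `|c k' - c m| <= c k' - c m <= `|c k' - c m| by rewrite -ler_norml.
      lra.
    have := Hn _ _ (ltnW hmk) i; have := Hp m; rewrite -/(c m) -/(c k') -/(r m) -/(r k').
    have /andP[n1 n2] : - `|c m - c k'| <= c m - c k' <= `|c m - c k'| by rewrite -ler_norml.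
    lra.
  have /andP[h1 h2] := nested_sup Hlh k.
  rewrite ler_norml; apply/andP; split; rewrite -/(c k) -/(r k); lra.
pose w1 := \row_i sup [set (Bs m).1.1 ord0 i - (Bs m).1.2 | m in [set: nat]].
pose w2 := \row_i sup [set (Bs m).2.1 ord0 i - (Bs m).2.2 | m in [set: nat]].
have Hw1 : forall k, inbox (Bs k).1.1 (Bs k).1.2 w1.
  apply: (key fst); first by move=> m k hmk; case: (Hnest m k hmk).
  by move=> k; case: (Hv k).
have Hw2 : forall k, inbox (Bs k).2.1 (Bs k).2.2 w2.
  apply: (key snd); first by move=> m k hmk; case: (Hnest m k hmk).
  by move=> k; case: (Hv k).
exists w1, w2; split.
  move=> i; have := Hw1 0%N i; have := Hw2 0%N i; rewrite /= !mxE !subr0.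
  by move=> h1 h2; split.
move=> x y xab yab hne; apply/negP => /eqP Heq.
have [e [e0 he]] : exists e : R, 0 < e /\
    (e <= `|p1 y - p1 x| \/ e <= `|p2 y - p2 x|).
  case: hne => hne.
    exists `|p1 y - p1 x|; split; last by left.
    by rewrite normr_gt0 subr_eq0 eq_sym.
  exists `|p2 y - p2 x|; split; last by right.
  by rewrite normr_gt0 subr_eq0 eq_sym.
set k := Num.truncn e^-1.
have hk : (k.+1%:R : R)^-1 <= e.
  have : e^-1 < k.+1%:R by apply: truncnS_gt.
  rewrite -div1r ltr_pdivrMr // => h.
  rewrite -div1r ler_pdivrMr ?ltr0n //; lra.
have [_ _ G] := Hsucc k.
have := G w1 w2 (Hw1 k.+1) (Hw2 k.+1) x y xab yab.
have -> : F y - F x + (p1 y - p1 x) *: w1 + (p2 y - p2 x) *: w2 =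
   (F y + p1 y *: w1 + p2 y *: w2) - (F x + p1 x *: w1 + p2 x *: w2).
  by apply/rowP => i; rewrite !mxE; ring.
rewrite Heq subrr eqxx => H.
suff : false by [].
apply: H; by case: he => h; [left|right]; apply: le_trans h.
Qed.


End Generic.

Section TVfacts.
Variable R : realType.

Definition tv (a : R) (f : R -> R) (t : R) : R := fine (total_variation a t f).

Lemma tv_props (a b : R) (f : R -> R) x y : bounded_variation a b f ->
  a <= x -> x <= y -> y <= b ->
  `|f y - f x| <= tv a f y - tv a f x /\ tv a f x <= tv a f y.
Proof.
move=> bv ax xy yb.
have ay : a <= y by apply: le_trans xy.
have xb : x <= b by apply: le_trans yb.
have bvy : bounded_variation a y f by apply: bounded_variationl bv.
have bvx : bounded_variation a x f by apply: bounded_variationl bv.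
have bvxy : bounded_variation x y f.
  by apply: (bounded_variationr ax xy).
have f1 := (bounded_variationP f ay).1 bvy.
have f2 := (bounded_variationP f ax).1 bvx.
have f3 := (bounded_variationP f xy).1 bvxy.
have D := total_variationD f ax xy.
have ge := total_variation_ge f xy.
have ge0 := total_variation_ge0 f xy.
rewrite /tv -(fineK f1) -(fineK f2) -(fineK f3) in D ge ge0 *.
rewrite -EFinD in D; case: D => ->.
rewrite lee_fin in ge; rewrite lee_fin in ge0.
rewrite /=; split; lra.
Qed.

Lemma tv_a (a : R) f : tv a f a = 0.
Proof. by rewrite /tv total_variationxx. Qed.

End TVfacts.

Lemma cont_sum_seq {R : realType} {T : topologicalType} (I : Type) (r : seq I)
  (f : I -> T -> R) x :
  (forall i, {for x, continuous (f i)}) -> {for x, continuous (fun t => \sum_(i <- r) f i t)}.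
Proof.
move=> H; elim: r => [|j r IH].
  have -> : (fun t => \sum_(i <- [::]) f i t) = (fun=> 0) by apply/funext => t; rewrite big_nil.
  exact: cvg_cst.
have -> : (fun t => \sum_(i <- j :: r) f i t) = (fun t => f j t + \sum_(i <- r) f i t).
  by apply/funext => t; rewrite big_cons.
by apply: cvgD; [exact: H | exact: IH].
Qed.

Section Setup.
Variables (R : realType) (n : nat) (a b : R) (F : R -> 'rV[R]_n).

Definition Fc i := fun t => F t ord0 i.

Lemma coord_bv : bounded_var a b F -> forall i, bounded_variation a b (Fc i).
Proof.
move=> [M HM] i; exists M => _ [s abs <-].
apply: le_trans (HM (vvariation a b F s) _); last by exists s.
rewrite /variation /vvariation; apply: ler_sum => k _.
by have := abs_le_enorm (F (nth b (a :: s) k.+1) - F (nth b (a :: s) k)) i; rewrite !mxE.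
Qed.

Lemma coord_cont : {within `[a, b], continuous F} ->
  forall i, {within `[a, b], continuous (Fc i)}.
Proof.
move=> Fc0 i x.
have := continuous_comp (Fc0 x) (@coord_continuous R 1 n ord0 i (F x)).
by [].

Qed.

Definition Ufun (t : R) : R := 9 * (t - a) + \sum_i tv a (Fc i) t.

Lemma U_props : bounded_var a b F -> forall x y, a <= x -> x <= y -> y <= b ->
  9 * (y - x) <= Ufun y - Ufun x /\ forall i, `|F y ord0 i - F x ord0 i| <= Ufun y - Ufun x.
Proof.
move=> bv x y ax xy yb.
have T i := tv_props (coord_bv bv i) ax xy yb.
have S : Ufun y - Ufun x = 9 * (y - x) + \sum_i (tv a (Fc i) y - tv a (Fc i) x).
  by rewrite /Ufun sumrB; ring.
have P : forall i, 0 <= tv a (Fc i) y - tv a (Fc i) x.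
  by move=> i; have [_ h] := T i; rewrite subr_ge0.
have S0 : 0 <= \sum_i (tv a (Fc i) y - tv a (Fc i) x) by apply: sumr_ge0 => i _.
rewrite S; split; first lra.
move=> i; rewrite (bigD1 i) //=.
have [h _] := T i.
have : 0 <= \sum_(j | j != i) (tv a (Fc j) y - tv a (Fc j) x) by apply: sumr_ge0 => j _.
have : 0 <= y - x by rewrite subr_ge0.
rewrite /Fc in h; lra.
Qed.

Lemma U_a : Ufun a = 0.
Proof. by rewrite /Ufun subrr mulr0 add0r big1 // => i _; rewrite tv_a. Qed.

Lemma U_cont : a < b -> CBV_interval a b F -> {within `[a, b], continuous Ufun}.
Proof.
move=> ab [Fc0 bv] x.
apply: cvgD.
  apply: (continuous_subspaceT (f := fun t : R => 9 * (t - a))) => y.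
  by apply: cvgM; [exact: cvg_cst | apply: cvgB; [exact: cvg_id | exact: cvg_cst]].
apply: cont_sum_seq => i.
exact: (total_variation_continuous ab (coord_cont (i:=i) Fc0) (coord_bv bv i)).
Qed.

End Setup.

Section Est.
Variables (R : realType) (n : nat) (a b : R).

Lemma bv_coord (X : R -> 'rV[R]_n) (U : R -> R) (k : R) : 0 <= k ->
  {in `[a, b] &, nondecreasing_fun U} ->
  (forall x y, x \in `[a, b] -> y \in `[a, b] -> x <= y ->
     forall i, `|X y ord0 i - X x ord0 i| <= k * (U y - U x)) ->
  bounded_var a b X.
Proof.
move=> k0 Und HX; exists (n%:R * k * (U b - U a)) => _ [s abs <-].
exact: vvar_le.
Qed.

Lemma bvnorm_le (X : R -> 'rV[R]_n) (U : R -> R) (k B : R) : a < b -> 0 <= k ->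
  {in `[a, b] &, nondecreasing_fun U} ->
  (forall x y, x \in `[a, b] -> y \in `[a, b] -> x <= y ->
     forall i, `|X y ord0 i - X x ord0 i| <= k * (U y - U x)) ->
  (forall t, t \in `[a, b] -> enorm (X t) <= B) ->
  bvnorm a b X <= B + n%:R * k * (U b - U a).
Proof.
move=> ab k0 Und HX HB; rewrite /bvnorm; apply: lerD.
  apply: ge_sup.
    by exists (enorm (X a)), a => //=; rewrite in_itv /= lexx ltW.
  by move=> _ [t tin <-]; apply: HB.
apply: ge_sup.
  exists (vvariation a b X [:: b]), [:: b] => //.
  exact: itv_partition1.
by move=> _ [s abs <-]; exact: vvar_le.
Qed.

Lemma abs_from_ordered (f g : R -> R) :
  (forall x y, a <= x -> x <= y -> y <= b -> `|f y - f x| <= g y - g x) ->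
  forall x y, x \in `[a, b] -> y \in `[a, b] -> `|f y - f x| <= `|g y - g x|.
Proof.
move=> H x y; rewrite !in_itv /= => /andP[ax xb] /andP[ay yb].
case: (leP x y) => xy.
  by apply: le_trans (H _ _ ax xy yb) _; apply: ler_norm.
rewrite distrC [X in _ <= X]distrC.
by apply: le_trans (H _ _ ay (ltW xy) xb) _; apply: ler_norm.
Qed.

End Est.

Section Interval.
Variables (R : realType) (n : nat).
Hypothesis hn : (3 <= n)%N.

Lemma interval_case (a b : R) : a < b ->
   forall F : R -> 'rV[R]_n, CBV_interval a b F ->
   forall eps : R, 0 < eps ->
   exists G : R -> 'rV[R]_n,
     [/\ CBV_interval a b G, {in `[a, b] &, injective G}
       & bvnorm a b (fun t => G t - F t) < eps].
Proof.
move=> ab F [Fcont bv] eps eps0.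
pose U := Ufun a F.
have UP : forall x y, a <= x -> x <= y -> y <= b ->
  9 * (y - x) <= U y - U x /\ forall i, `|F y ord0 i - F x ord0 i| <= U y - U x.
  exact: U_props bv.
have Ua : U a = 0 by apply: U_a.
have Und : {in `[a, b] &, nondecreasing_fun U}.
  move=> x y; rewrite !in_itv /= => /andP[ax xb] /andP[ay yb] xy.
  have [h _] := UP x y ax xy yb; rewrite -subr_ge0; apply: le_trans h.
  by rewrite mulr_ge0 // subr_ge0.
have Uab : U a < U b.
  have [h _] := UP a b (lexx a) (ltW ab) (lexx b).
  have : 0 < b - a by rewrite subr_gt0.
  lra.
have Ucont : {within `[a, b], continuous U} by apply: U_cont.
have ain : a \in `[a, b] by rewrite in_itv /= lexx ltW.
have bin : b \in `[a, b] by rewrite in_itv /= lexx ltW.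
have Ubnd : forall x, x \in `[a, b] -> U a <= U x <= U b.
  move=> x xin; have := xin; rewrite in_itv /= => /andP[ax xb].
  by apply/andP; split; [exact: Und ain xin ax | exact: Und xin bin xb].
have HF : forall x y, x \in `[a, b] -> y \in `[a, b] ->
    forall i, `|F y ord0 i - F x ord0 i| <= `|U y - U x|.
  move=> x y xin yin i.
  apply: (abs_from_ordered (a:=a) (b:=b) (f := fun t => F t ord0 i)) => // x' y' ax xy yb.
  by have [_ h] := UP x' y' ax xy yb; apply: h.
have H1 : forall x y, x \in `[a, b] -> y \in `[a, b] ->
    `|(fun t : R => t) y - (fun t : R => t) x| <= `|U y - U x|.
  move=> x y xin yin.
  apply: (abs_from_ordered (a:=a) (b:=b) (f := fun t => t)) => // x' y' ax xy yb.
  have [h _] := UP x' y' ax xy yb.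
  rewrite ger0_norm ?subr_ge0 //; have : 0 <= y' - x' by rewrite subr_ge0.
  lra.
have H2 : forall x y, x \in `[a, b] -> y \in `[a, b] ->
    `|(fun _ : R => (0 : R)) y - (fun _ : R => (0 : R)) x| <= `|U y - U x|.
  by move=> x y _ _; rewrite subrr normr0.
set C := n%:R * (`|a| + `|b| + U b).
have C0 : 0 <= C.
  apply: mulr_ge0 => //; apply: addr_ge0; first by apply: addr_ge0.
  by have /andP[] := Ubnd _ bin; rewrite Ua.
set d := eps / (2 * (C + 1)).
have d0 : 0 < d by rewrite divr_gt0 // mulr_gt0 //; lra.
have [w1 [w2 [wb Hinj]]] := @generic R n hn a b F (fun t => t) (fun _ => 0) U
  (ltW ab) Uab Ucont Ubnd HF H1 H2 d d0.
pose G t := F t + t *: w1 + (fun _ : R => (0 : R)) t *: w2.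
have GF : forall t, G t - F t = t *: w1 + 0 *: w2.
  by move=> t; apply/rowP => i; rewrite /G !mxE; ring.
have Gi : forall t i, G t ord0 i = F t ord0 i + t * w1 ord0 i.
  by move=> t i; rewrite /G !mxE mul0r addr0.
exists G; split.
- split.
    move=> x; apply: cvgD; first apply: cvgD.
    + exact: Fcont.
    + apply: (continuous_subspaceT (f := fun t : R => t *: w1)) => y.
      by apply: continuousZr_tmp; exact: cvg_id.
    + exact: cvg_cst.
  apply: (bv_coord (U := U) (k := 1 + d)) => //; first lra.
  move=> x y xin yin xy i; rewrite !Gi.
  have := HF x y xin yin i.
  move: xin yin; rewrite !in_itv /= => /andP[ax xb] /andP[ay yb].
  have [h1 h2] := UP x y ax xy yb.
  have := h2 i.
  have hw := (wb i).1.
  have : `|y * w1 ord0 i - x * w1 ord0 i| <= d * (y - x).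
    rewrite -mulrBl normrM ger0_norm ?subr_ge0 // mulrC.
    by apply: ler_wpM2r; rewrite // subr_ge0.
  have : `|F y ord0 i + y * w1 ord0 i - (F x ord0 i + x * w1 ord0 i)| <=
     `|F y ord0 i - F x ord0 i| + `|y * w1 ord0 i - x * w1 ord0 i|.
    have -> : F y ord0 i + y * w1 ord0 i - (F x ord0 i + x * w1 ord0 i) =
      (F y ord0 i - F x ord0 i) + (y * w1 ord0 i - x * w1 ord0 i) by ring.
    exact: ler_normD.
  have : 0 <= y - x by rewrite subr_ge0.
  nra.
- move=> x y xin yin Gxy; case: (eqVneq x y) => // nxy.
  have := Hinj x y xin yin (or_introl nxy).
  by rewrite -/(G x) -/(G y) Gxy eqxx.
- have dC : d * (C + 1) = eps / 2 by rewrite /d; field; lra.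
  apply: (@le_lt_trans _ _ (d * (n%:R * (`|a| + `|b|)) + n%:R * d * (U b - U a))).
    apply: (bvnorm_le (U := U)) => //; first exact: ltW.
      move=> x y xin yin xy i; rewrite !GF !mxE mul0r !addr0 -mulrBl normrM.
      move: xin yin; rewrite !in_itv /= => /andP[ax xb] /andP[ay yb].
      have [h _] := UP x y ax xy yb.
      rewrite ger0_norm ?subr_ge0 // mulrC.
      have hw := (wb i).1.
      have : 0 <= y - x by rewrite subr_ge0.
      have := normr_ge0 (w1 ord0 i).
      nra.
    move=> t tin; apply: le_trans (enorm_le_sum _) _.
    apply: (@le_trans _ _ (\sum_(i < n) d * (`|a| + `|b|))); last first.
      rewrite sumr_const card_ord -mulr_natl le_eqVlt; apply/orP; left; apply/eqP; ring.
    apply: ler_sum => i _; rewrite GF !mxE mul0r addr0 normrM mulrC.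
    apply: ler_pM => //; first exact: (wb i).1.
    move: tin; rewrite in_itv /= => /andP[hat htb].
    have /andP[n1 n2] : - `|a| <= a <= `|a| by rewrite -ler_norml.
    have /andP[n3 n4] : - `|b| <= b <= `|b| by rewrite -ler_norml.
    rewrite ler_norml; apply/andP; split; lra.
  rewrite Ua subr0.
  have -> : d * (n%:R * (`|a| + `|b|)) + n%:R * d * U b = d * C by rewrite /C; ring.
  have : d * C <= d * (C + 1) by rewrite ler_pM2l //; lra.
  lra.
Qed.

End Interval.

Section Trig.
Variable R : realType.

Lemma lip_gen (f df : R -> R) :
  (forall x : R, is_derive x (1 : R) f (df x)) -> continuous f -> (forall x, `|df x| <= 1) ->
  forall x y, `|f y - f x| <= `|y - x|.
Proof.
move=> Hd Hc Hb.
have H : forall x y, x < y -> `|f y - f x| <= `|y - x|.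
  move=> x y xy.
  have Hw : {within `[x, y], continuous f} by apply: continuous_subspaceT.
  have [c _ ->] := @MVT R f df x y xy (fun z _ => Hd z) Hw.
  rewrite normrM -[X in _ <= X]mul1r; apply: ler_wpM2r => //.
move=> x y; case: (ltgtP x y) => [xy|yx|->]; first exact: H.
  by rewrite distrC [X in _ <= X]distrC; apply: H.
by rewrite !subrr normr0.
Qed.

Lemma sin_lip x y : `|sin y - sin x| <= `|y - x| :> R.
Proof.
apply: (lip_gen (df := cos)) => //; first exact: continuous_sin.
exact: cos_max.
Qed.

Lemma cos_lip x y : `|cos y - cos x| <= `|y - x| :> R.
Proof.
apply: (lip_gen (df := fun x => - sin x)) => //; first exact: continuous_cos.
by move=> z; rewrite normrN; exact: sin_max.
Qed.

Lemma pi_lt4 : pi < 4 :> R.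
Proof. have := @pihalf_lt2 R; lra. Qed.

Lemma trig_u0 (u : R) : 0 <= u < pi *+ 2 -> sin u = 0 -> cos u = 1 -> u = 0.
Proof.
move=> /andP[u0 u2] su cu.
have pi0 := @pi_gt0 R.
case: (ltgtP u 0) => [//|upos|//]; first by move: u0; rewrite leNgt => /negP.
case: (ltgtP u pi) => [ulpi|ugpi|upi].
- have := sin_gt0_pi (x := u); rewrite upos ulpi su => /(_ isT); rewrite ltxx.
  by [].
- have : 0 < sin (u - pi).
    apply: sin_gt0_pi; rewrite subr_gt0 ugpi /=.
    by rewrite ltrBlDr; move: u2; rewrite mulr2n.
  by rewrite sinB su cospi sinpi cu; lra.
- by move: cu; rewrite upi cospi; lra.
Qed.

Lemma trig_inj (x y : R) : 0 <= x < 1 -> 0 <= y < 1 ->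
  cos (pi *+ 2 * x) = cos (pi *+ 2 * y) -> sin (pi *+ 2 * x) = sin (pi *+ 2 * y) -> x = y.
Proof.
wlog xy : x y / x <= y.
  move=> H hx hy hc hs; case: (leP x y) => h; first exact: H.
  by apply/esym; apply: H => //; apply: ltW.
move=> /andP[x0 x1] /andP[y0 y1] hc hs.
have pi0 := @pi_gt0 R.
set u := pi *+ 2 * y - pi *+ 2 * x.
have su : sin u = 0 by rewrite /u sinB hs hc; ring.
have cu : cos u = 1 by rewrite /u cosB hs hc; have := cos2Dsin2 (pi *+ 2 * y); lra.
have : 0 <= u < pi *+ 2.
  rewrite /u -mulrBr mulr2n; apply/andP; split.
    by apply: mulr_ge0; [lra | rewrite subr_ge0].
  have : y - x < 1 by lra.
  have : 0 <= y - x by rewrite subr_ge0.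
  nra.
move/trig_u0 => /(_ su cu); rewrite /u -mulrBr => /eqP.
rewrite mulf_eq0 => /orP[|]; first by rewrite mulr2n; lra.
by rewrite subr_eq0 => /eqP.
Qed.

End Trig.

Section Circle.
Variables (R : realType) (n : nat).
Hypothesis hn : (3 <= n)%N.

Lemma circle_case : forall F : R -> 'rV[R]_n, CBV_circle F ->
   forall eps : R, 0 < eps ->
   exists G : R -> 'rV[R]_n,
     [/\ CBV_circle G, {in `[0, 1[ &, injective G}
       & bvnorm 0 1 (fun t => G t - F t) < eps].
Proof.
move=> F [Fcont Fper bv] eps eps0.
have ab : (0 : R) < 1 by [].
have Fwc : {within `[0, 1], continuous F} by apply: continuous_subspaceT.
pose U := Ufun 0 F.
have UP : forall x y, 0 <= x -> x <= y -> y <= 1 ->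
  9 * (y - x) <= U y - U x /\ forall i, `|F y ord0 i - F x ord0 i| <= U y - U x.
  exact: U_props bv.
have Ua : U 0 = 0 by apply: U_a.
have Und : {in `[0, 1] &, nondecreasing_fun U}.
  move=> x y; rewrite !in_itv /= => /andP[ax xb] /andP[ay yb] xy.
  have [h _] := UP x y ax xy yb; rewrite -subr_ge0; apply: le_trans h.
  by rewrite mulr_ge0 // subr_ge0.
have Uab : U 0 < U 1.
  have [h _] := UP 0 1 (lexx 0) (ltW ab) (lexx 1).
  lra.
have Ucont : {within `[0, 1], continuous U} by apply: U_cont.
have ain : (0 : R) \in `[0, 1] by rewrite in_itv /= lexx ltW.
have bin : (1 : R) \in `[0, 1] by rewrite in_itv /= lexx ltW.
have Ubnd : forall x, x \in `[0, 1] -> U 0 <= U x <= U 1.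
  move=> x xin; have := xin; rewrite in_itv /= => /andP[ax xb].
  by apply/andP; split; [exact: Und ain xin ax | exact: Und xin bin xb].
have HF : forall x y, x \in `[0, 1] -> y \in `[0, 1] ->
    forall i, `|F y ord0 i - F x ord0 i| <= `|U y - U x|.
  move=> x y xin yin i.
  apply: (abs_from_ordered (a:=0) (b:=1) (f := fun t => F t ord0 i)) => // x' y' ax xy yb.
  by have [_ h] := UP x' y' ax xy yb; apply: h.
pose c : R := pi *+ 2.
have c0 : 0 < c by rewrite /c mulr2n; have := @pi_gt0 R; lra.
have c8 : c <= 8 by rewrite /c mulr2n; have := @pi_lt4 R; lra.
pose p1 t := cos (c * t).
pose p2 t := sin (c * t).
have Hp : forall x y, 0 <= x -> x <= y -> y <= 1 ->
    `|p1 y - p1 x| <= U y - U x /\ `|p2 y - p2 x| <= U y - U x.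
  move=> x y ax xy yb; have [h _] := UP x y ax xy yb.
  have e : `|c * y - c * x| <= 8 * (y - x).
    rewrite -mulrBr normrM (ger0_norm (ltW c0)) ger0_norm ?subr_ge0 //.
    by apply: ler_wpM2r; rewrite // subr_ge0.
  have : 0 <= y - x by rewrite subr_ge0.
  have := cos_lip (c * x) (c * y); have := sin_lip (c * x) (c * y).
  rewrite /p1 /p2; split; lra.
have H1 : forall x y, x \in `[0, 1] -> y \in `[0, 1] -> `|p1 y - p1 x| <= `|U y - U x|.
  move=> x y xin yin.
  apply: (abs_from_ordered (a:=0) (b:=1) (f := p1)) => // x' y' ax xy yb.
  by have [h _] := Hp x' y' ax xy yb.
have H2 : forall x y, x \in `[0, 1] -> y \in `[0, 1] -> `|p2 y - p2 x| <= `|U y - U x|.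
  move=> x y xin yin.
  apply: (abs_from_ordered (a:=0) (b:=1) (f := p2)) => // x' y' ax xy yb.
  by have [_ h] := Hp x' y' ax xy yb.
set C := n%:R * (1 + U 1).
have C0 : 0 <= C.
  apply: mulr_ge0 => //; have /andP[h0 h] := Ubnd _ bin.
  have := Ua; lra.
set d := eps / (2 * (2 * C + 1)).
have d0 : 0 < d by rewrite divr_gt0 // mulr_gt0 //; lra.
have [w1 [w2 [wb Hinj]]] := @generic R n hn 0 1 F p1 p2 U
  (ltW ab) Uab Ucont Ubnd HF H1 H2 d d0.
pose G t := F t + p1 t *: w1 + p2 t *: w2.
have GF : forall t, G t - F t = p1 t *: w1 + p2 t *: w2.
  by move=> t; apply/rowP => i; rewrite /G !mxE; ring.
have Gi : forall t i, G t ord0 i = F t ord0 i + p1 t * w1 ord0 i + p2 t * w2 ord0 i.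
  by move=> t i; rewrite /G !mxE.
have cc : continuous (fun t : R => c * t).
  by move=> t; apply: cvgM; [exact: cvg_cst | exact: cvg_id].
exists G; split.
- split.
  + move=> x; apply: cvgD; first apply: cvgD.
    * exact: Fcont.
    * apply: continuousZr_tmp.
      exact: (continuous_comp (cc x) (@continuous_cos R (c * x))).
    * apply: continuousZr_tmp.
      exact: (continuous_comp (cc x) (@continuous_sin R (c * x))).
  + move=> t; rewrite /G Fper /p1 /p2 mulrDr mulr1.
    by have := @cosD2pi R (c * t); have := @sinD2pi R (c * t); rewrite /periodic => -> ->.
  + apply: (bv_coord (U := U) (k := 1 + 2 * d)) => //; first lra.
    move=> x y xin yin xy i; rewrite !Gi.
    move: xin yin; rewrite !in_itv /= => /andP[ax xb] /andP[ay yb].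
    have [h1 h2] := UP x y ax xy yb.
    have [q1 q2] := Hp x y ax xy yb.
    have := h2 i.
    have [hw1 hw2] := wb i.
    have e1 : `|p1 y * w1 ord0 i - p1 x * w1 ord0 i| <= d * (U y - U x).
      rewrite -mulrBl normrM mulrC; apply: ler_pM => //.
    have e2 : `|p2 y * w2 ord0 i - p2 x * w2 ord0 i| <= d * (U y - U x).
      rewrite -mulrBl normrM mulrC; apply: ler_pM => //.
    have : `|F y ord0 i + p1 y * w1 ord0 i + p2 y * w2 ord0 i -
            (F x ord0 i + p1 x * w1 ord0 i + p2 x * w2 ord0 i)| <=
       `|F y ord0 i - F x ord0 i| + `|p1 y * w1 ord0 i - p1 x * w1 ord0 i|
        + `|p2 y * w2 ord0 i - p2 x * w2 ord0 i|.
      have -> : F y ord0 i + p1 y * w1 ord0 i + p2 y * w2 ord0 i -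
            (F x ord0 i + p1 x * w1 ord0 i + p2 x * w2 ord0 i) =
        (F y ord0 i - F x ord0 i) + (p1 y * w1 ord0 i - p1 x * w1 ord0 i)
        + (p2 y * w2 ord0 i - p2 x * w2 ord0 i) by ring.
      apply: le_trans (ler_normD _ _) _; rewrite lerD2r; exact: ler_normD.
    lra.
- move=> x y xin yin Gxy; case: (eqVneq x y) => // nxy.
  have xin' : x \in `[0, 1].
    by move: xin; rewrite !in_itv /= => /andP[-> /ltW ->].
  have yin' : y \in `[0, 1].
    by move: yin; rewrite !in_itv /= => /andP[-> /ltW ->].
  have hne : p1 x != p1 y \/ p2 x != p2 y.
    case: (eqVneq (p1 x) (p1 y)) => e1; last by left.
    case: (eqVneq (p2 x) (p2 y)) => e2; last by right.
    move: xin yin; rewrite !in_itv /= => hx hy.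
    by move: nxy; rewrite (trig_inj hx hy e1 e2) eqxx.
  have := Hinj x y xin' yin' hne.
  by rewrite -/(G x) -/(G y) Gxy eqxx.
- have dC : d * (2 * C + 1) = eps / 2 by rewrite /d; field; lra.
  apply: (@le_lt_trans _ _ (n%:R * (2 * d) + n%:R * (2 * d) * (U 1 - U 0))).
    apply: (bvnorm_le (U := U)) => //; first lra.
      move=> x y xin yin xy i; rewrite !GF !mxE.
      move: xin yin; rewrite !in_itv /= => /andP[ax xb] /andP[ay yb].
      have [q1 q2] := Hp x y ax xy yb.
      have [hw1 hw2] := wb i.
      have e1 : `|p1 y * w1 ord0 i - p1 x * w1 ord0 i| <= d * (U y - U x).
        rewrite -mulrBl normrM mulrC; apply: ler_pM => //.
      have e2 : `|p2 y * w2 ord0 i - p2 x * w2 ord0 i| <= d * (U y - U x).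
        rewrite -mulrBl normrM mulrC; apply: ler_pM => //.
      have -> : p1 y * w1 ord0 i + p2 y * w2 ord0 i - (p1 x * w1 ord0 i + p2 x * w2 ord0 i) =
        (p1 y * w1 ord0 i - p1 x * w1 ord0 i) + (p2 y * w2 ord0 i - p2 x * w2 ord0 i) by ring.
      apply: le_trans (ler_normD _ _) _; lra.
    move=> t tin; apply: le_trans (enorm_le_sum _) _.
    apply: (@le_trans _ _ (\sum_(i < n) (2 * d))); last first.
      by rewrite sumr_const card_ord -mulr_natl le_eqVlt; apply/orP; left; apply/eqP; ring.
    apply: ler_sum => i _; rewrite GF !mxE.
    have [hw1 hw2] := wb i.
    apply: le_trans (ler_normD _ _) _.
    rewrite !normrM.
    have : `|p1 t| <= 1 by apply: cos_max.
    have : `|p2 t| <= 1 by apply: sin_max.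
    have := normr_ge0 (p1 t); have := normr_ge0 (p2 t).
    have := normr_ge0 (w1 ord0 i); have := normr_ge0 (w2 ord0 i).
    nra.
  rewrite Ua subr0.
  have -> : n%:R * (2 * d) + n%:R * (2 * d) * U 1 = 2 * d * C by rewrite /C; ring.
  have : 2 * d * C <= d * (2 * C + 1) by nra.
  lra.
Qed.

End Circle.

Unset Implicit Arguments.

Theorem theorem3p5 (R : realType) (n : nat) (hn : (3 <= n)%N) :
  (* J = [a, b] a closed interval *)
  (forall (a b : R), a < b ->
   forall F : R -> 'rV[R]_n, CBV_interval a b F ->
   forall eps : R, 0 < eps ->
   exists G : R -> 'rV[R]_n,
     [/\ CBV_interval a b G, {in `[a, b] &, injective G}
       & bvnorm a b (fun t => G t - F t) < eps])
  /\
  (* J = R/Z a circle *)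
  (forall F : R -> 'rV[R]_n, CBV_circle F ->
   forall eps : R, 0 < eps ->
   exists G : R -> 'rV[R]_n,
     [/\ CBV_circle G, {in `[0, 1[ &, injective G}
       & bvnorm 0 1 (fun t => G t - F t) < eps]).
Proof.
split.
- exact: (@interval_case R n hn).
- exact: (@circle_case R n hn).
Qed.
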